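(* Let $h\in\mathbb{Z}$, $k\ge1$ and $n\ge0$. The number of partitions $\lambda\vdash n$ having an $h$-fixed hook arising from a part of size $k$ equals the number of partitions $\mu$ of $n+\binom{k}{2}-(h+1)$ such that the minimal excludant of $\mu$ is $k$ and $$h+1+\#\{\text{parts of }\mu\text{ larger than }k\}>\#\{\text{parts of }\mu\text{ smaller than }k\}.$$
   Context: A partition $\lambda=(\lambda_1\ge\cdots\ge\lambda_t>0)$ of $n$ has first-column hook lengths $h_{s,1}(\lambda)=\lambda_s+(t-s)$. An $h$-fixed hook arising from a part of size $k$ is an index $s$ with $h_{s,1}(\lambda)=s+h$ and $\lambda_s=k$. The minimal excludant (mex) of a partition is the smallest positive integer that does not occur as a part. Parts are counted with multiplicity. Partitions of negative integers do not exist (count $0$). *)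

(* Defs.v *)
From mathcomp Require Import all_boot all_order all_algebra.
Set Implicit Arguments. Unset Strict Implicit. Unset Printing Implicit Defensive.
Import Order.TTheory GRing.Theory Num.Theory.

Definition is_partition (n : nat) (l : seq nat) : bool :=
  [&& sorted geq l, all (fun x => 0 < x) l & sumn l == n].

(* All lists of length <= len whose entries lie in [1, b]; a finite (duplicate-free)
   superset of the partitions of n when len = b = n. *)
Fixpoint bounded_seqs (b len : nat) : seq (seq nat) :=
  match len with
  | 0 => [:: [::]]
  | len'.+1 => [::] :: [seq x :: s | x <- iota 1 b, s <- bounded_seqs b len']
  end.

(* The partitions of n (every partition of n has at most n parts, each <= n). *)
Definition partitions (n : nat) : seq (seq nat) :=
  [seq l <- bounded_seqs n n | is_partition n l].

Definition npart (n : nat) (P : pred (seq nat)) : nat := count P (partitions n).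

Definition npartZ (N : int) (P : pred (seq nat)) : nat :=
  if (N < 0)%R then 0 else npart `|N|%N P.

(* lambda = (lambda_1 >= ... >= lambda_t) has an h-fixed hook arising from a part
   of size k: some index s (1 <= s <= t) with lambda_s + (t - s) = s + h and
   lambda_s = k.  Here lambda_s = nth 0 l (s-1). *)
Definition has_hfixed_hook (h : int) (k : nat) (l : seq nat) : bool :=
  has (fun s => (nth 0 l s.-1 == k) &&
                (Posz (nth 0 l s.-1 + (size l - s)) == (Posz s + h)%R))
      (iota 1 (size l)).

(* minimal excludant: smallest positive integer not occurring as a part
   (it lies in [1, size l + 1]). *)
Definition mex (l : seq nat) : nat :=
  head 0 [seq m <- iota 1 (size l).+1 | m \notin l].

Definition nlarger (k : nat) (l : seq nat) : nat := count (fun x => k < x) l.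
Definition nsmaller (k : nat) (l : seq nat) : nat := count (fun x => x < k) l.

(* Main.v *)
Require Import Defs.
From mathcomp Require Import all_boot all_order all_algebra zify.
Import Order.TTheory GRing.Theory Num.Theory.

Lemma geq_tr : transitive geq.
Proof. move=> x y z /= h1 h2; exact: leq_trans h2 h1. Qed.
Lemma geq_tot : total geq.
Proof. move=> x y /=; exact: leq_total. Qed.
Lemma geq_anti : antisymmetric geq.
Proof. move=> x y /andP[h1 h2]; apply: anti_leq; rewrite /= in h1 h2; by rewrite h1 h2. Qed.

Lemma sorted_eq_geq s1 s2 : sorted geq s1 -> sorted geq s2 -> perm_eq s1 s2 -> s1 = s2.
Proof. exact: (@sorted_eq _ geq geq_tr geq_anti). Qed.

Lemma sorted_mid A x B : sorted geq A -> sorted geq B ->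
  all (fun y => x <= y) A -> all (fun y => y <= x) B -> sorted geq (A ++ x :: B).
Proof.
move=> sA sB hA hB.
rewrite sorted_pairwise; last exact: geq_tr.
rewrite pairwise_cat -!(sorted_pairwise geq_tr) sA /=.
have px : path geq x B.
  rewrite (path_sortedE geq_tr) sB andbT; apply/allP=> y yB; exact: (allP hB).
rewrite px andbT; apply/allrelP=> a b aA; rewrite inE => /predU1P[->|bB].
  exact: (allP hA).
apply: leq_trans (allP hB _ bB) (allP hA _ aA).
Qed.

Lemma size_le_sumn s : all (fun x => 0 < x) s -> size s <= sumn s.
Proof. elim: s => //= x s IH /andP[hx hs]; have := IH hs; lia. Qed.

Lemma mem_le_sumn s x : x \in s -> x <= sumn s.
Proof. elim: s => //= y s IH; rewrite inE => /predU1P[->|/IH]; lia. Qed.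

Lemma mem_bounded b len l :
  (l \in bounded_seqs b len) = (size l <= len) && all (fun x => 0 < x <= b) l.
Proof.
elim: len l => [|len IH] [|x l] //=.
rewrite inE /=; apply/allpairsP/idP.
  move=> [[y s] /= [yI sI [-> ->]]].
  move: yI; rewrite mem_iota => hy; rewrite IH in sI.
  move/andP: sI => [h1 h2]; rewrite ltnS h1 h2 hy andbT //.
rewrite ltnS; move=> /and3P[hs hx hl]; exists (x, l) => /=; split=> //.
  rewrite mem_iota; lia.
by rewrite IH hs hl.
Qed.

Lemma uniq_bounded b len : uniq (bounded_seqs b len).
Proof.
elim: len => [|len IH] //=; apply/andP; split.
  by apply/allpairsP => -[[y s] /= [_ _]].
apply: allpairs_uniq => //; first exact: iota_uniq.
by move=> [x1 s1] [x2 s2] _ _ /= [-> ->].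
Qed.

Lemma mem_partitions n l : (l \in partitions n) = is_partition n l.
Proof.
rewrite mem_filter; case hp: (is_partition n l) => //=.
move/and3P: hp => [_ hpos /eqP hs]; rewrite mem_bounded.
rewrite -hs size_le_sumn //=; apply/allP => x xl.
by rewrite (allP hpos _ xl) mem_le_sumn.
Qed.

Lemma uniq_partitions n : uniq (partitions n).
Proof. exact/filter_uniq/uniq_bounded. Qed.

Lemma count_bij (T1 T2 : eqType) (A : seq T1) (B : seq T2) (P : pred T1) (Q : pred T2)
  (f : T1 -> T2) : uniq A -> uniq B ->
  (forall x y, x \in A -> P x -> y \in A -> P y -> f x = f y -> x = y) ->
  (forall x, x \in A -> P x -> (f x \in B) && Q (f x)) ->
  (forall y, y \in B -> Q y -> exists x, [/\ x \in A, P x & f x = y]) ->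
  count P A = count Q B.
Proof.
move=> uA uB inj fw sur; rewrite -!size_filter; apply/eqP; rewrite eqn_leq.
apply/andP; split.
  rewrite -(size_map f); apply: uniq_leq_size.
    rewrite map_inj_in_uniq ?filter_uniq // => x y.
    rewrite !mem_filter => /andP[px xA] /andP[py yA]; exact: inj.
  move=> y /mapP[x]; rewrite mem_filter => /andP[px xA] ->.
  by move: (fw x xA px) => /andP[h1 h2]; rewrite mem_filter h1 h2.
rewrite -(size_map f (filter P A)); apply: uniq_leq_size; first exact: filter_uniq.
move=> y; rewrite mem_filter => /andP[qy yB].
have [x [xA px <-]] := sur y yB qy; apply: map_f; by rewrite mem_filter px xA.
Qed.

Lemma head_filter_find (p : pred nat) s : head 0 (filter p s) = nth 0 s (find p s).
Proof. elim: s => //= x s IH; by case: (p x). Qed.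

Lemma mexP l : [/\ 0 < mex l, mex l \notin l & forall m, 0 < m < mex l -> m \in l].
Proof.
rewrite /mex head_filter_find.
set r := iota 1 (size l).+1.
have hr : has (fun m => m \notin l) r.
  apply/negPn/negP => /hasPn H.
  have : size r <= size l.
    apply: uniq_leq_size; first exact: iota_uniq.
    by move=> x /H; rewrite negbK.
  by rewrite size_iota ltnn.
have hf := hr; rewrite has_find size_iota in hf.
rewrite nth_iota //; split; first by [].
  by have := nth_find 0 hr; rewrite nth_iota.
move=> m /andP[m0 mlt].
move: mlt hf; set i := find _ r => mlt hf.
have hlt : m.-1 < i by lia.
have := before_find 0 hlt; rewrite nth_iota; last by lia.
by move/negbFE; rewrite add1n prednK.
Qed.

Lemma mex_eq l k : 0 < k -> k \notin l -> (forall m, 0 < m < k -> m \in l) -> mex l = k.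
Proof.
move=> k0 kl H; have [m0 ml Hm] := mexP l.
case: (ltngtP (mex l) k) => // hlt.
  by move: (H _ (introT andP (conj m0 hlt))); rewrite (negbTE ml).
by move: (Hm _ (introT andP (conj k0 hlt))); rewrite (negbTE kl).
Qed.

Lemma sumn_iota1 m : sumn (iota 1 m) = 'C(m.+1, 2).
Proof.
elim: m => [|m IH] //.
have -> : iota 1 m.+1 = iota 1 m ++ [:: m.+1] by rewrite -[m.+1]addn1 iotaD add1n addn1.
rewrite sumn_cat IH !binS !bin1 bin0 /=; lia.
Qed.

Lemma sumn_mapS s : sumn (map succn s) = sumn s + size s.
Proof. elim: s => //= x s ->; lia. Qed.

Lemma sumn_predfilter s : all (fun x => 0 < x) s ->
  sumn (map predn (filter (fun x => 1 < x) s)) + size s = sumn s.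
Proof.
elim: s => //= x s IH /andP[hx hs]; have := IH hs.
case: ifP => /= h; lia.
Qed.

Definition F (k : nat) (top bot : seq nat) : seq nat :=
  sort geq (map succn top ++ iota 1 k.-1 ++ map predn (filter (fun x => 1 < x) bot)).

Definition hp (h : int) (k : nat) (l : seq nat) (s : nat) : bool :=
  (nth 0 l s.-1 == k) && (Posz (nth 0 l s.-1 + (size l - s)) == (Posz s + h)%R).

Definition fmap (h : int) (k : nat) (l : seq nat) : seq nat :=
  let s := (find (hp h k l) (iota 1 (size l))).+1 in F k (take s.-1 l) (drop s l).

Lemma hook_hp h k l : has_hfixed_hook h k l = has (hp h k l) (iota 1 (size l)).
Proof. by []. Qed.

Lemma hp_uniq h k l s1 s2 : s1 <= size l -> s2 <= size l ->
  hp h k l s1 -> hp h k l s2 -> s1 = s2.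
Proof.
move=> h1 h2 /andP[/eqP e1 /eqP c1] /andP[/eqP e2 /eqP c2].
rewrite e1 in c1; rewrite e2 in c2.
have : (Posz s1 - Posz s2 = Posz s2 - Posz s1)%R.
  have := f_equal (fun z => z - Posz s1 - Posz s2)%R c1.
  have := f_equal (fun z => z - Posz s1 - Posz s2)%R c2.
  lia.
lia.
Qed.

Lemma hp_decomp h k top bot :
  (Posz (k + size bot) = Posz (size top) + 1 + h)%R ->
  hp h k (top ++ k :: bot) (size top).+1.
Proof.
move=> c; rewrite /hp /= nth_cat ltnn subnn /= eqxx /= size_cat /=.
have -> : size top + (size bot).+1 - (size top).+1 = size bot by lia.
apply/eqP; rewrite c; lia.
Qed.

Lemma hook_of_decomp h k top bot :
  (Posz (k + size bot) = Posz (size top) + 1 + h)%R ->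
  has_hfixed_hook h k (top ++ k :: bot).
Proof.
move=> c; rewrite hook_hp; apply/hasP; exists (size top).+1.
  rewrite mem_iota size_cat /=; lia.
exact: hp_decomp.
Qed.

Lemma fmap_decomp h k top bot :
  (Posz (k + size bot) = Posz (size top) + 1 + h)%R ->
  fmap h k (top ++ k :: bot) = F k top bot.
Proof.
move=> c; rewrite /fmap.
set l := top ++ k :: bot.
have hh : has (hp h k l) (iota 1 (size l)) by rewrite -hook_hp; apply: hook_of_decomp.
have hf := hh; rewrite has_find size_iota in hf.
have := nth_find 0 hh; rewrite nth_iota // add1n => hps.
have e : (find (hp h k l) (iota 1 (size l))).+1 = (size top).+1.
  apply: (@hp_uniq h k l) => //.
    by rewrite /l size_cat /=; lia.
  exact: hp_decomp.
rewrite e /= take_size_cat // /l -cat_rcons drop_size_cat // size_rcons //.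
Qed.

Lemma hook_decomp h k l : has_hfixed_hook h k l ->
  exists top bot, l = top ++ k :: bot /\
    (Posz (k + size bot) = Posz (size top) + 1 + h)%R.
Proof.
rewrite hook_hp => /hasP[s]; rewrite mem_iota => /andP[s1 s2] /andP[/eqP e /eqP c].
exists (take s.-1 l), (drop s l).
have hs : s.-1 < size l by lia.
split.
  by rewrite -{1}(cat_take_drop s.-1 l) (drop_nth 0 hs) e prednK.
rewrite e in c; rewrite size_take hs size_drop c; lia.
Qed.

Lemma count0 (p : pred nat) s : (forall x, x \in s -> ~~ p x) -> count p s = 0.
Proof. move=> H; apply/eqP; rewrite eqn0Ngt -has_count; apply/hasPn => x /H //. Qed.

Lemma countall (p : pred nat) s : (forall x, x \in s -> p x) -> count p s = size s.
Proof. move=> H; apply/eqP; rewrite -all_count; exact/allP. Qed.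

Lemma part_split n top k bot : is_partition n (top ++ k :: bot) ->
  [/\ sorted geq top, sorted geq bot, (forall x, x \in top -> k <= x),
      (forall x, x \in bot -> x <= k) &
     [/\ (forall x, x \in top -> 0 < x), (forall x, x \in bot -> 0 < x)
    & sumn top + k + sumn bot = n]].
Proof.
move=> /and3P[s p /eqP e].
move: s; rewrite sorted_pairwise; last exact: geq_tr.
rewrite pairwise_cat /= => /and4P[ar pt pk pb].
have sorted_t : sorted geq top by rewrite sorted_pairwise //; exact: geq_tr.
have sorted_b : sorted geq bot.
  by rewrite sorted_pairwise //; exact: geq_tr.
split => //; last split.
- move=> x xt; have := allrelP ar x k xt; rewrite inE eqxx; exact.
- by move=> x xb; exact: (allP pk).
- by move=> x xt; apply: (allP p); rewrite mem_cat xt.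
- by move=> x xb; apply: (allP p); rewrite mem_cat inE xb !orbT.
- by rewrite -e sumn_cat /=; lia.
Qed.

Lemma F_props (h : int) k n top bot : 0 < k -> is_partition n (top ++ k :: bot) ->
  (Posz (k + size bot) = Posz (size top) + 1 + h)%R ->
  [/\ sorted geq (F k top bot), all (fun x => 0 < x) (F k top bot),
      Posz (sumn (F k top bot)) = (Posz n + Posz 'C(k, 2) - (h + 1))%R,
      mex (F k top bot) = k &
      (Posz (nsmaller k (F k top bot)) < h + 1 + Posz (nlarger k (F k top bot)))%R].
Proof.
move=> k0 hp c.
have [st sb tk bk [tp bp sm]] := @part_split n top k bot hp.
set Bp := map predn (filter (fun x => 1 < x) bot).
set X := map succn top ++ iota 1 k.-1 ++ Bp.
have pX : perm_eq (F k top bot) X by rewrite /F perm_sort.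
have mT : forall x, x \in map succn top -> k < x.
  by move=> x /mapP[y /tk yt ->]; rewrite ltnS.
have mI : forall x, x \in iota 1 k.-1 -> 0 < x < k.
  by move=> x; rewrite mem_iota; lia.
have mB : forall x, x \in Bp -> 0 < x < k.
  move=> x /mapP[y]; rewrite mem_filter => /andP[y1 /bk yb] ->; lia.
have memX : forall x, x \in F k top bot = [|| x \in map succn top, x \in iota 1 k.-1 | x \in Bp].
  by move=> x; rewrite (perm_mem pX) !mem_cat.
have hsB : sumn Bp + size bot = sumn bot.
  apply: sumn_predfilter; apply/allP => x; exact: bp.
split.
- exact: sort_sorted geq_tot _.
- apply/allP => x; rewrite memX => /or3P[/mT|/mI|/mB]; lia.
- rewrite (perm_sumn pX) !sumn_cat sumn_mapS.
  have -> : sumn (iota 1 k.-1) = 'C(k, 2) by rewrite sumn_iota1 prednK.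
  move: c; lia.
- apply: mex_eq => //.
    rewrite memX; apply/negP => /or3P[/mT|/mI|/mB]; lia.
  by move=> m hm; rewrite memX mem_iota; apply/or3P; apply: Or32; lia.
- rewrite /nsmaller /nlarger !(permP pX) !count_cat.
  rewrite (count0 (fun x => x < k) (map succn top)); last by move=> x /mT; lia.
  rewrite (countall (fun x => x < k) (iota 1 k.-1)); last by move=> x /mI; lia.
  rewrite (countall (fun x => x < k) Bp); last by move=> x /mB; lia.
  rewrite (countall (fun x => k < x) (map succn top)); last by move=> x /mT; lia.
  rewrite (count0 (fun x => k < x) (iota 1 k.-1)); last by move=> x /mI; lia.
  rewrite (count0 (fun x => k < x) Bp); last by move=> x /mB; lia.
  rewrite !size_map size_iota.
  have : size (filter (fun x => 1 < x) bot) <= size bot by rewrite size_filter count_size.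
  move: c; lia.
Qed.

Lemma filter_allT (p : pred nat) s : (forall x, x \in s -> p x) -> filter p s = s.
Proof. move=> H; apply/all_filterP/allP; exact: H. Qed.

Lemma filter_noneF (p : pred nat) s : (forall x, x \in s -> ~~ p x) -> filter p s = [::].
Proof.
elim: s => //= x s IH H; rewrite (negbTE (H x (mem_head _ _))) IH //.
by move=> y ys; apply: H; rewrite inE ys orbT.
Qed.

Lemma map_predS s : map predn (map succn s) = s.
Proof. by elim: s => //= x s ->. Qed.

Lemma map_Spred s : (forall x, x \in s -> 0 < x) -> map succn (map predn s) = s.
Proof.
elim: s => //= x s IH H; rewrite prednK ?IH //; last exact: H (mem_head _ _).
by move=> y ys; apply: H; rewrite inE ys orbT.
Qed.

Lemma permC (p : pred nat) s : perm_eq s (filter p s ++ filter (predC p) s).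
Proof. by rewrite perm_sym; apply: permEl; apply: perm_filterC. Qed.

Lemma F_inj (h : int) k n top1 bot1 top2 bot2 : 0 < k ->
  is_partition n (top1 ++ k :: bot1) -> is_partition n (top2 ++ k :: bot2) ->
  (Posz (k + size bot1) = Posz (size top1) + 1 + h)%R ->
  (Posz (k + size bot2) = Posz (size top2) + 1 + h)%R ->
  F k top1 bot1 = F k top2 bot2 -> top1 ++ k :: bot1 = top2 ++ k :: bot2.
Proof.
move=> k0 hp1 hp2 c1 c2 eF.
have [st1 sb1 tk1 bk1 [tp1 bp1 _]] := @part_split n top1 k bot1 hp1.
have [st2 sb2 tk2 bk2 [tp2 bp2 _]] := @part_split n top2 k bot2 hp2.
pose X top bot := map succn top ++ iota 1 k.-1 ++ map predn (filter (fun x => 1 < x) bot).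
have pX : forall top bot, perm_eq (F k top bot) (X top bot) by move=> t b; rewrite /F perm_sort.
have p12 : perm_eq (X top1 bot1) (X top2 bot2).
  by rewrite -(permPl (pX top1 bot1)) eF pX.
have fG : forall top bot, (forall x, x \in top -> k <= x) -> (forall x, x \in bot -> x <= k) ->
    filter (fun x => k < x) (X top bot) = map succn top.
  move=> t b tk bk; rewrite !filter_cat filter_allT; last by move=> x /mapP[y /tk ? ->]; lia.
  rewrite (filter_noneF (fun x => k < x) (iota 1 k.-1)); last by move=> x; rewrite mem_iota; lia.
  rewrite filter_noneF ?cats0 //.
  by move=> x /mapP[y]; rewrite mem_filter => /andP[_ /bk ?] ->; lia.
have fL : forall top bot, (forall x, x \in top -> k <= x) -> (forall x, x \in bot -> x <= k) ->
    filter (fun x => x < k) (X top bot) = iota 1 k.-1 ++ map predn (filter (fun x => 1 < x) bot).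
  move=> t b tk bk; rewrite !filter_cat filter_noneF; last by move=> x /mapP[y /tk ? ->]; lia.
  rewrite (filter_allT (fun x => x < k) (iota 1 k.-1)); last by move=> x; rewrite mem_iota; lia.
  rewrite filter_allT //.
  by move=> x /mapP[y]; rewrite mem_filter => /andP[? /bk ?] ->; lia.
have et : top1 = top2.
  apply: sorted_eq_geq => //; apply: (perm_map_inj succn_inj).
  by rewrite -(fG _ _ tk1 bk1) -(fG _ _ tk2 bk2); apply: perm_filter.
subst top2.
have pB : perm_eq (filter (fun x => 1 < x) bot1) (filter (fun x => 1 < x) bot2).
  have := perm_filter (fun x => x < k) p12; rewrite (fL _ _ tk1 bk1) (fL _ _ tk2 bk2).
  rewrite perm_cat2l => /(perm_map succn).
  rewrite !map_Spred //.
    by move=> x; rewrite mem_filter => /andP[? _]; lia.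
  by move=> x; rewrite mem_filter => /andP[? _]; lia.
have sz : size bot1 = size bot2 by move: c1 c2; lia.
have one : forall bot, (forall x, x \in bot -> 0 < x) -> (forall x, x \in bot -> x <= k) ->
    filter (predC (fun x => 1 < x)) bot = nseq (size bot - size (filter (fun x => 1 < x) bot)) 1.
  move=> b bp _; have /all_pred1P -> : all (pred1 1) (filter (predC (fun x => 1 < x)) b).
    by apply/allP => x; rewrite mem_filter /= => /andP[h1 /bp h2]; apply/eqP; lia.
  have := count_predC (fun x => 1 < x) b; rewrite !size_filter => e.
  congr nseq; rewrite -e addKn //.
have eb : bot1 = bot2.
  apply: sorted_eq_geq => //.
  rewrite (permPl (permC (fun x => 1 < x) bot1)) (permPr (permC (fun x => 1 < x) bot2)).
  rewrite (one _ bp1 bk1) (one _ bp2 bk2) sz (perm_size pB).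
  by rewrite perm_cat2r.
by rewrite eb.
Qed.

Lemma perm_sub_uniq (r s : seq nat) : uniq r -> {subset r <= s} ->
  exists s', perm_eq s (r ++ s').
Proof.
elim: r s => [|x r IH] s /=; first by exists s.
move=> /andP[xr ur] sub.
have sub' : {subset r <= s} by move=> y yr; apply: sub; rewrite inE yr orbT.
have [s1 p1] := IH s ur sub'.
have xs1 : x \in s1.
  have : x \in r ++ s1 by rewrite -(perm_mem p1); apply: sub; exact: mem_head.
  by rewrite mem_cat (negbTE xr).
exists (rem x s1).
apply: (perm_trans p1).
have h1 : perm_eq (r ++ s1) (r ++ x :: rem x s1) by rewrite perm_cat2l; exact: perm_to_rem.
apply: (perm_trans h1); exact: (permEl (perm_catCA r [:: x] (rem x s1))).
Qed.

Lemma surj (h : int) k n M mu : 0 < k -> is_partition M mu -> mex mu = k ->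
  (Posz (nsmaller k mu) < h + 1 + Posz (nlarger k mu))%R ->
  Posz M = (Posz n + Posz 'C(k, 2) - (h + 1))%R ->
  exists top bot, [/\ is_partition n (top ++ k :: bot),
     (Posz (k + size bot) = Posz (size top) + 1 + h)%R & F k top bot = mu].
Proof.
move=> k0 /and3P[smu pmu /eqP sM] mk cnd hN.
have [_ kmu inmu] := mexP mu; rewrite mk in kmu inmu.
have posmu : forall x, x \in mu -> 0 < x by move=> x; apply: (allP pmu).
set D := filter (fun x => k < x) mu.
set C := filter (fun x => x < k) mu.
have pDC : perm_eq mu (D ++ C).
  have -> : C = filter (predC (fun x => k < x)) mu.
    apply: eq_in_filter => x xmu /=; have : x != k by apply: contraNneq kmu => <-.
    lia.
  exact: permC.
have [C0 pC] : exists C0, perm_eq C (iota 1 k.-1 ++ C0).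
  apply: perm_sub_uniq; first exact: iota_uniq.
  move=> x; rewrite mem_iota mem_filter => hx; rewrite inmu //; lia.
have mC0 : forall x, x \in C0 -> 0 < x < k.
  move=> x xC0; have : x \in C by rewrite (perm_mem pC) mem_cat xC0 orbT.
  rewrite mem_filter => /andP[xk /posmu x0]; lia.
have mD : forall x, x \in D -> k < x by move=> x; rewrite mem_filter => /andP[].
set d := size D; set c0 := size C0.
have hc : nsmaller k mu = k.-1 + c0.
  by rewrite /nsmaller -size_filter -/C (perm_size pC) size_cat size_iota.
have hd : nlarger k mu = d by rewrite /nlarger -size_filter.
rewrite hc hd in cnd.
set L := `|(Posz d + 1 + h - Posz k)%R|%N.
have hL : Posz L = (Posz d + 1 + h - Posz k)%R by rewrite /L; lia.
have c0L : c0 <= L by lia.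
set top := sort geq (map predn D).
set bot := sort geq (map succn C0 ++ nseq (L - c0) 1).
have mtop : forall x, x \in top -> k <= x.
  move=> x; rewrite mem_sort => /mapP[y /mD ? ->]; lia.
have mbot : forall x, x \in bot -> 0 < x <= k.
  move=> x; rewrite mem_sort mem_cat => /orP[/mapP[y /mC0 ? ->]|/nseqP[-> _]]; lia.
have stop : size top = d by rewrite /top size_sort size_map.
have sbot : size bot = L by rewrite /bot size_sort size_cat size_map size_nseq; lia.
have cond : (Posz (k + size bot) = Posz (size top) + 1 + h)%R by rewrite sbot stop; lia.
exists top, bot; split => //.
- apply/and3P; split.
  + apply: sorted_mid; try exact: (sort_sorted geq_tot).
      by apply/allP => x /mtop.
    by apply/allP => x /mbot /andP[].
  + apply/allP => x; rewrite mem_cat inE => /or3P[/mtop|/eqP->|/mbot/andP[]//]; lia.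
  + have e1 : sumn top + d = sumn D.
      rewrite /top (perm_sumn (permEl (perm_sort _ _))) /d.
      rewrite -(size_map predn D) -sumn_mapS map_Spred //.
      by move=> x /mD; lia.
    have e2 : sumn bot = sumn C0 + c0 + (L - c0).
      rewrite /bot (perm_sumn (permEl (perm_sort _ _))) sumn_cat sumn_mapS.
      by congr (_ + _); elim: (L - c0) => //= m ->.
    have e3 : sumn mu = sumn D + 'C(k, 2) + sumn C0.
      rewrite (perm_sumn pDC) sumn_cat (perm_sumn pC) sumn_cat sumn_iota1 prednK //.
      lia.
    rewrite sumn_cat /=; apply/eqP.
    move: hN hL c0L; rewrite -sM e3; lia.
- apply: sorted_eq_geq; first exact: (sort_sorted geq_tot).
    by [].
  rewrite /F (permPl (permEl (perm_sort _ _))).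
  have pT : perm_eq (map succn top) D.
    apply: (perm_trans (perm_map succn (permEl (perm_sort geq (map predn D))))).
    rewrite map_Spred //; by move=> x /mD; lia.
  have pB : perm_eq (map predn (filter (fun x => 1 < x) bot)) C0.
    have -> : C0 = map predn (map succn C0) by rewrite map_predS.
    apply: perm_map.
    rewrite (permPl (perm_filter _ (permEl (perm_sort _ _)))) filter_cat.
    rewrite filter_allT; last by move=> x /mapP[y /mC0 ? ->]; lia.
    rewrite filter_noneF ?cats0 //.
    by move=> x /nseqP[-> _].
  apply: (perm_trans (perm_cat pT (perm_cat (perm_refl _) pB))).
  rewrite (permPr pDC).
  by rewrite perm_cat2l perm_sym.
Qed.

Theorem theorem3p4 (h : int) (k n : nat) : (1 <= k)%N ->
  npart n (has_hfixed_hook h k) =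
  npartZ (Posz n + Posz 'C(k, 2) - (h + 1))%R
    (fun mu => (mex mu == k) &&
               (Posz (nsmaller k mu) < h + 1 + Posz (nlarger k mu))%R).
Proof.
move=> k0; rewrite /npartZ.
set N := (Posz n + Posz 'C(k, 2) - (h + 1))%R.
case: ifP => hN.
  rewrite /npart; apply/eqP; rewrite -leqn0 leqNgt -has_count; apply/hasP => -[l].
  rewrite mem_partitions => lp /hook_decomp [top [bot [el c]]].
  rewrite el in lp.
  have [_ _ hs _ _] := @F_props h k n top bot k0 lp c.
  move: hN hs; rewrite /N; lia.
have N0 : Posz `|N|%N = N by move: hN; lia.
rewrite /npart; apply: (@count_bij _ _ _ _ _ _ (fmap h k)).
- exact: uniq_partitions.
- exact: uniq_partitions.
- move=> x y; rewrite !mem_partitions => xp /hook_decomp [t1 [b1 [e1 c1]]].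
  move=> yp /hook_decomp [t2 [b2 [e2 c2]]].
  rewrite e1 e2 !fmap_decomp // => eF.
  rewrite e1 in xp; rewrite e2 in yp.
  exact: (@F_inj h k n t1 b1 t2 b2 k0 xp yp c1 c2 eF).
- move=> x; rewrite mem_partitions => xp /hook_decomp [t [b [e c]]].
  rewrite e fmap_decomp //; rewrite e in xp.
  have [s1 s2 hs hm hc] := @F_props h k n t b k0 xp c.
  rewrite mem_partitions /is_partition s1 s2 hm eqxx hc /= andbT.
  apply/eqP; move: N0 hs; rewrite /N; lia.
- move=> y; rewrite mem_partitions => yp /andP[/eqP ym yc].
  have [t [b [xp c eF]]] := @surj h k n _ y k0 yp ym yc N0.
  exists (t ++ k :: b); split.
  + by rewrite mem_partitions.
  + exact: hook_of_decomp.
  + by rewrite fmap_decomp.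
Qed.
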